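(* Let $r,q,a\in\mathbb{R}$, $\sigma>0$, $b>0$, $0\le R<1$, $T>0$, and set $V_b(t)=be^{-a(T-t)}$. The solution $B(V,t)$ of the problem \[ \frac{\partial B}{\partial t}+\frac12\sigma^2V^2\frac{\partial^2B}{\partial V^2}+(r-q)V\frac{\partial B}{\partial V}-rB=0,\quad V_b(t)<V<+\infty,\ 0<t<T, \] \[ B(V_b(t),t)=e^{-r(T-t)}R,\ 0<t<T,\qquad B(V,T)=1,\ V>b, \] is given by \[ B(V,t)=R\,e^{-r(T-t)}+W(V,t)(1-R)e^{-r(T-t)}, \] where \[ W(V,t)=N(d_1)-\left(\frac{V}{be^{-a(T-t)}}\right)^{1-\frac{2(r-q-a)}{\sigma^2}}N(d_2), \] \[ d_1=\frac{\ln\frac{V}{b}+(r-q-\frac{\sigma^2}{2})(T-t)}{\sigma\sqrt{T-t}},\qquad d_2=\frac{\ln\frac{b}{V}+(r-q-2a-\frac{\sigma^2}{2})(T-t)}{\sigma\sqrt{T-t}}. \] Furthermore, for $V>V_b(t)$ (and $0\le t<T$), \[ B_V(V,t)>0,\qquad R\,e^{-r(T-t)}<B(V,t)<e^{-r(T-t)}. \]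
   Context: $N(x)=\frac{1}{\sqrt{2\pi}}\int_{-\infty}^{x}e^{-s^2/2}\,ds$ is the standard normal distribution function. (Financial interpretation: $V$ is the firm value, $B$ the price of a zero-coupon corporate bond with face value $1$ and maturity $T$, default occurs when $V\le V_b(t)$, and $Re^{-r(T-t)}$ is the default recovery; $W$ is the survival probability.) *)

(* Defs.v *)
From Stdlib Require Import Reals.
From Coquelicot Require Import Coquelicot.
Open Scope R_scope.

Definition Nphi (x : R) : R :=
  / sqrt (2 * PI) *
  RInt_gen (fun s => exp (- s ^ 2 / 2)) (Rbar_locally m_infty) (at_point x).

Definition Vb (a b T t : R) : R := b * exp (- a * (T - t)).

Definition d1 (r q sigma b T V t : R) : R :=
  (ln (V / b) + (r - q - sigma ^ 2 / 2) * (T - t)) / (sigma * sqrt (T - t)).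

Definition d2 (r q a sigma b T V t : R) : R :=
  (ln (b / V) + (r - q - 2 * a - sigma ^ 2 / 2) * (T - t)) / (sigma * sqrt (T - t)).

Definition Wsurv (r q a sigma b T V t : R) : R :=
  Nphi (d1 r q sigma b T V t)
  - Rpower (V / (b * exp (- a * (T - t)))) (1 - 2 * (r - q - a) / sigma ^ 2)
    * Nphi (d2 r q a sigma b T V t).

Definition Bond (r q a sigma b Rec T V t : R) : R :=
  Rec * exp (- r * (T - t)) + Wsurv r q a sigma b T V t * (1 - Rec) * exp (- r * (T - t)).

(* Main.v *)
Require Import Defs.
From Stdlib Require Import Reals Lra.
From Coquelicot Require Import Coquelicot.
Open Scope R_scope.


Definition gf (t : R) := exp (- (t * t)).
Definition G (x : R) := RInt gf 0 x.
Definition hf (x t : R) := exp (- (x * x) * (1 + t * t)) / (1 + t * t).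
Definition H (x : R) := RInt (hf x) 0 1.

Lemma exRc : forall (f : R -> R) a b, (forall z, Rmin a b <= z <= Rmax a b -> continuous f z) -> ex_RInt f a b.
Proof. intros f a b Hf. apply (ex_RInt_continuous (V:=R_CompleteNormedModule)). exact Hf. Qed.

Lemma gf_cont : forall x, continuous gf x.
Proof. intros x. unfold gf. apply (ex_derive_continuous (K:=R_AbsRing) (V:=R_NormedModule)). auto_derive. auto. Qed.

Lemma ex_RInt_gf : forall a b, ex_RInt gf a b.
Proof. intros. apply exRc. intros; apply gf_cont. Qed.

Lemma G_deriv : forall x, is_derive G x (gf x).
Proof.
  intros x. apply is_derive_RInt with (a := 0).
  - apply filter_forall. intros y. apply (RInt_correct (V:=R_CompleteNormedModule)), ex_RInt_gf.
  - apply gf_cont.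
Qed.

Lemma one_t2_pos : forall t, 0 < 1 + t * t.
Proof. intros; nra. Qed.

Lemma hf_cont : forall x t, continuous (hf x) t.
Proof. intros x t. unfold hf. apply (ex_derive_continuous (K:=R_AbsRing) (V:=R_NormedModule)). auto_derive.
  pose proof (one_t2_pos t); lra. Qed.

Lemma H_deriv : forall x : R, is_derive H x (-2 * gf x * G x).
Proof.
  intros x. unfold H.
  assert (D: is_derive (fun x0 => RInt (fun t => hf x0 t) 0 1) x
     (RInt (fun t => Derive (fun u => hf u t) x) 0 1)).
  { apply is_derive_RInt_param.
    - apply filter_forall. intros y t _. unfold hf. auto_derive.
      pose proof (one_t2_pos t); lra.
    - intros t _.
      apply continuity_2d_pt_ext with (f := fun u v => -2 * u * exp (- (u*u) * (1 + v*v))).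
      { intros u v. symmetry. apply is_derive_unique. unfold hf. auto_derive.
        pose proof (one_t2_pos v); lra. pose proof (one_t2_pos v). field. lra. }
      apply continuity_2d_pt_mult.
      apply continuity_2d_pt_mult. apply continuity_2d_pt_const. apply continuity_2d_pt_id1.
      apply continuity_1d_2d_pt_comp.
      apply derivable_continuous_pt, derivable_pt_exp.
      apply continuity_2d_pt_mult. apply continuity_2d_pt_opp.
      apply continuity_2d_pt_mult; apply continuity_2d_pt_id1.
      apply continuity_2d_pt_plus. apply continuity_2d_pt_const.
      apply continuity_2d_pt_mult; apply continuity_2d_pt_id2.
    - apply filter_forall. intros y. apply exRc. intros; apply hf_cont. }
  replace (-2 * gf x * G x) with (RInt (fun t => Derive (fun u => hf u t) x) 0 1); auto.
  rewrite (RInt_ext _ (fun t => (-2 * gf x) * (x * (gf (x * t + 0))))).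
  2:{ intros t _. apply is_derive_unique. unfold hf. auto_derive.
      pose proof (one_t2_pos t); lra. unfold gf, scal; simpl; unfold mult; simpl.
      pose proof (one_t2_pos t).
      assert (E: exp (-(x*x)) * exp (- ((x*t+0)*(x*t+0))) = exp (-(x*x)*(1+t*t))) by (rewrite <- exp_plus; f_equal; ring).
      rewrite <- E. field. lra. }
  apply is_RInt_unique.
  assert (L1: is_RInt (fun t => x * gf (x*t+0)) 0 1 (G x)).
  { apply (is_RInt_comp_lin gf x 0 0 1). replace (x*0+0) with 0 by ring.
    replace (x*1+0) with x by ring. apply (RInt_correct (V:=R_CompleteNormedModule)), ex_RInt_gf. }
  apply (is_RInt_scal _ _ _ (-2 * gf x)) in L1. exact L1.
Qed.


Lemma G0 : G 0 = 0.
Proof. unfold G. rewrite RInt_point. reflexivity. Qed.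

Lemma H0 : H 0 = PI / 4.
Proof.
  unfold H. rewrite <- atan_1.
  apply is_RInt_unique.
  replace (atan 1) with (minus (atan 1) (atan 0)).
  2:{ rewrite atan_0. unfold minus, plus, opp; simpl. ring. }
  apply (is_RInt_ext (fun t => / (1 + t²))).
  { intros t _. unfold hf. replace (-(0*0)*(1+t*t)) with 0 by ring. rewrite exp_0.
    unfold Rsqr, Rdiv. rewrite Rmult_1_l. reflexivity. }
  apply (is_RInt_derive (V:=R_CompleteNormedModule)).
  - intros; apply is_derive_atan.
  - intros x _. apply (ex_derive_continuous (K:=R_AbsRing) (V:=R_NormedModule)).
    auto_derive. unfold Rsqr. pose proof (one_t2_pos x); lra.
Qed.

Lemma F_const : forall x, G x * G x + H x = PI / 4.
Proof.
  intros x.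
  assert (D: forall y, is_derive (fun z => G z * G z + H z) y 0).
  { intros y.
    assert (Hd: is_derive (fun z => G z * G z + H z) y (gf y * G y + G y * gf y + (-2 * gf y * G y))).
    { apply (is_derive_plus (K:=R_AbsRing) (V:=R_NormedModule)).
      apply (is_derive_mult (fun z => G z) (fun z => G z)); try apply G_deriv.
      intros; apply Rmult_comm. apply H_deriv. }
    replace 0 with (gf y * G y + G y * gf y + (-2 * gf y * G y)) by ring. exact Hd. }
  destruct (MVT_gen (fun z => G z * G z + H z) 0 x (fun _ => 0)) as [c [_ Hc]].
  - intros; apply D.
  - intros. apply derivable_continuous_pt. exists 0. apply is_derive_Reals. apply D.
  - rewrite G0, H0 in Hc. lra.
Qed.

Lemma H_bounds : forall x, 0 <= H x <= gf x.
Proof.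
  intros x. unfold H. split.
  - apply RInt_ge_0. lra. apply exRc; intros; apply hf_cont.
    intros t _. unfold hf. pose proof (one_t2_pos t). pose proof (exp_pos (- (x * x) * (1 + t * t))).
    apply Rlt_le, Rdiv_lt_0_compat; lra.
  - replace (gf x) with (RInt (fun _ => gf x) 0 1).
    2:{ rewrite RInt_const. unfold scal; simpl; unfold mult; simpl. ring. }
    apply RInt_le. lra. apply exRc; intros; apply hf_cont.
    apply exRc; intros; apply continuous_const.
    intros t [Ht0 Ht1]. unfold hf, gf.
    pose proof (one_t2_pos t).
    assert (exp (- (x * x) * (1 + t * t)) <= exp (- (x*x))).
    { destruct (Req_dec x 0). subst. right. f_equal. ring.
      left. apply exp_increasing. assert (0 < x*x) by (apply Rsqr_pos_lt; auto). assert (0 < (x*x)*(t*t)) by (apply Rmult_lt_0_compat; nra). nra. }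
    apply (Rmult_le_reg_r (1 + t*t)). lra. unfold Rdiv. rewrite Rmult_assoc, Rinv_l by lra.
    pose proof (exp_pos (- (x*x))). nra.
Qed.

Lemma gf_lim : is_lim gf p_infty 0.
Proof.
  unfold gf.
  apply (is_lim_comp (fun y => exp y) (fun t => - (t*t)) p_infty 0 m_infty).
  - apply is_lim_exp_m.
  - replace m_infty with (Rbar_opp (Rbar_mult p_infty p_infty)) by reflexivity.
    apply is_lim_opp. apply is_lim_mult; try apply is_lim_id. simpl. auto.
  - exists 0. intros. discriminate.
Qed.

Lemma G_nonneg : forall x, 0 <= x -> 0 <= G x.
Proof.
  intros x Hx. unfold G. apply RInt_ge_0; auto. apply ex_RInt_gf.
  intros. unfold gf. apply Rlt_le, exp_pos.
Qed.

Lemma G_lim : is_lim G p_infty (sqrt PI / 2).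
Proof.
  apply (is_lim_ext_loc (fun x => sqrt (PI/4 - H x))).
  { exists 0. intros x Hx. rewrite <- (F_const x).
    replace (G x * G x + H x - H x) with (G x * G x) by ring.
    apply sqrt_square. apply G_nonneg; lra. }
  replace (sqrt PI / 2) with (sqrt (PI/4 - 0)).
  2:{ replace (PI/4 - 0) with (PI * / (2*2)) by field.
      rewrite sqrt_mult_alt. rewrite sqrt_inv. rewrite sqrt_square. reflexivity. lra.
      pose proof PI_RGT_0; lra. }
  apply (is_lim_comp_continuous (fun x => PI/4 - H x) sqrt).
  - apply (is_lim_minus (fun _ => PI/4) H p_infty (PI/4) 0).
    apply is_lim_const.
    apply (is_lim_le_le_loc (fun _ => 0) gf). exists 0. intros; apply H_bounds.
    apply is_lim_const. apply gf_lim. reflexivity.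
  - apply continuity_pt_filterlim. apply continuity_pt_sqrt.
    pose proof PI_RGT_0; lra.
Qed.


Lemma is_derive_eq : forall (f : R -> R) (x l l' : R), is_derive f x l -> l = l' -> is_derive f x l'.
Proof. intros; subst; auto. Qed.

Lemma DG : forall x, Derive G x = gf x.
Proof. intros; apply is_derive_unique, G_deriv. Qed.
Lemma exG : forall x, ex_derive G x.
Proof. intros; eexists; apply G_deriv. Qed.

Lemma const_of_deriv0 : forall f : R -> R, (forall y, is_derive f y 0) -> forall x, f x = f 0.
Proof.
  intros f D x.
  destruct (MVT_gen f 0 x (fun _ => 0)) as [c [_ Hc]].
  - intros; apply D.
  - intros. apply derivable_continuous_pt. exists 0. apply is_derive_Reals. apply D.
  - lra.
Qed.

Lemma G_odd : forall x, G (- x) = - G x.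
Proof.
  intros x.
  assert (E : G (- x) + G x = G (- 0) + G 0).
  2:{ rewrite Ropp_0, G0 in E. lra. }
  apply (const_of_deriv0 (fun z => G (- z) + G z)).
  intros y. evar (l : R).
  assert (Hd : is_derive (fun z => G (- z) + G z) y l).
  { auto_derive. repeat split; try apply exG. rewrite !DG. unfold l; reflexivity. }
  unfold l in Hd. replace (gf (-y)) with (gf y) in Hd by (unfold gf; f_equal; ring).
  replace 0 with (- (1) * gf y + 1 * gf y) by ring. exact Hd.
Qed.

Lemma G_lim_m : is_lim G m_infty (- (sqrt PI / 2)).
Proof.
  apply (is_lim_ext (fun x => - G (- x))).
  { intros x. rewrite G_odd. ring. }
  apply (is_lim_opp (fun x => G (- x)) m_infty (sqrt PI / 2)).
  apply (is_lim_comp G (fun x => - x) m_infty (sqrt PI / 2) p_infty).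
  apply G_lim.
  replace p_infty with (Rbar_opp m_infty) by reflexivity.
  apply is_lim_opp, is_lim_id.
  exists 0. intros; discriminate.
Qed.

Definition Kf (y : R) := sqrt 2 * G (y / sqrt 2).

Lemma sqrt2_pos : 0 < sqrt 2.
Proof. apply sqrt_lt_R0. lra. Qed.

Lemma Kf_deriv : forall y, is_derive Kf y (exp (- y ^ 2 / 2)).
Proof.
  intros y. evar (l : R).
  assert (Hd : is_derive Kf y l).
  { unfold Kf. auto_derive. apply exG. rewrite DG. unfold l; reflexivity. }
  unfold l in Hd. unfold gf in Hd.
  replace (exp (- y ^ 2 / 2)) with (sqrt 2 * (1 * / sqrt 2 * exp (- (y / sqrt 2 * (y / sqrt 2))))).
  exact Hd.
  pose proof sqrt2_pos.
  replace (- (y / sqrt 2 * (y / sqrt 2))) with (- y ^ 2 / 2).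
  field. lra.
  replace (y / sqrt 2 * (y / sqrt 2)) with (y * y / (sqrt 2 * sqrt 2)) by (field; lra).
  rewrite sqrt_sqrt by lra. field.
Qed.

Lemma Kf_lim_m : is_lim Kf m_infty (- (sqrt 2 * sqrt PI / 2)).
Proof.
  unfold Kf.
  replace (Finite (- (sqrt 2 * sqrt PI / 2))) with (Rbar_mult (sqrt 2) (- (sqrt PI / 2))) ; [| simpl; apply Rbar_finite_eq; unfold Rdiv; ring].
  apply (is_lim_scal_l (fun y => G (y / sqrt 2)) (sqrt 2) m_infty (- (sqrt PI / 2))).
  apply (is_lim_comp G (fun y => y / sqrt 2) m_infty (- (sqrt PI / 2)) m_infty).
  apply G_lim_m.
  pose proof sqrt2_pos as Hs2.
  apply (is_lim_ext (fun y => / sqrt 2 * y)). intros; unfold Rdiv; ring.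
  replace m_infty with (Rbar_mult (/ sqrt 2) m_infty) at 2.
  apply is_lim_scal_l, is_lim_id.
  simpl. destruct (Rle_dec 0 (/ sqrt 2)). destruct (Rle_lt_or_eq_dec 0 (/ sqrt 2) r). reflexivity.
  exfalso. pose proof (Rinv_0_lt_compat _ Hs2). lra. exfalso. pose proof (Rinv_0_lt_compat _ Hs2). lra.
  exists 0. intros; discriminate.
Qed.

Definition Ncl (x : R) := / 2 + G (x / sqrt 2) / sqrt PI.

Lemma sqrtPI_pos : 0 < sqrt PI.
Proof. apply sqrt_lt_R0. apply PI_RGT_0. Qed.

Lemma Nphi_eq : forall x, Nphi x = Ncl x.
Proof.
  intros x. unfold Nphi.
  rewrite (is_RInt_gen_unique _ (Kf x - - (sqrt 2 * sqrt PI / 2))).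
  - unfold Ncl, Kf. rewrite sqrt_mult_alt by lra.
    pose proof sqrt2_pos. pose proof sqrtPI_pos. field. lra.
  - apply (is_RInt_gen_ext (Derive Kf)).
    + apply filter_forall. intros ab s _. apply is_derive_unique, Kf_deriv.
    + apply (is_RInt_gen_Derive (Fa := Rbar_locally m_infty) (Fb := at_point x) Kf).
      * apply filter_forall. intros ab s _. eexists; apply Kf_deriv.
      * apply filter_forall. intros ab s _.
        apply (continuous_ext (fun y => exp (- y ^ 2 / 2))).
        intros; symmetry; apply is_derive_unique, Kf_deriv.
        apply (ex_derive_continuous (K:=R_AbsRing) (V:=R_NormedModule)). auto_derive. auto.
      * apply Kf_lim_m.
      * intros P HP. apply locally_singleton in HP. exact HP.
Qed.

Definition phi (x : R) := exp (- x ^ 2 / 2) / sqrt (2 * PI).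

Lemma Nphi_deriv : forall x : R, is_derive Nphi x (phi x).
Proof.
  intros x. apply (is_derive_ext Ncl). intros; symmetry; apply Nphi_eq.
  evar (l : R).
  assert (Hd : is_derive Ncl x l).
  { unfold Ncl. auto_derive. apply exG. rewrite DG. unfold l; reflexivity. }
  unfold l in Hd. unfold gf in Hd. unfold phi.
  eapply is_derive_eq. exact Hd.
  pose proof sqrt2_pos. pose proof sqrtPI_pos.
  replace (- (x * / sqrt 2 * (x * / sqrt 2))) with (- x ^ 2 / 2).
  rewrite sqrt_mult_alt by lra. field. lra.
  replace (x * / sqrt 2 * (x * / sqrt 2)) with (x * x / (sqrt 2 * sqrt 2)) by (field; lra).
  rewrite sqrt_sqrt by lra. field.
Qed.

Lemma phi_pos : forall x, 0 < phi x.
Proof.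
  intros. unfold phi. apply Rdiv_lt_0_compat. apply exp_pos.
  apply sqrt_lt_R0. pose proof PI_RGT_0; lra.
Qed.

Lemma G_strict : forall y z, y < z -> G y < G z.
Proof.
  intros y z Hyz.
  destruct (MVT_gen G y z gf) as [c [_ Hc]].
  - intros; apply G_deriv.
  - intros. apply derivable_continuous_pt. exists (gf x). apply is_derive_Reals. apply G_deriv.
  - assert (0 < gf c) by (unfold gf; apply exp_pos). nra.
Qed.

Lemma G_ub : forall y, G y < sqrt PI / 2.
Proof.
  intros y. apply Rlt_le_trans with (G (y + 1)). apply G_strict; lra.
  assert (Hle := is_lim_le_loc (fun _ => G (y+1)) G p_infty (G (y+1)) (sqrt PI / 2)).
  simpl in Hle. apply Hle.
  exists (y+1). intros w Hw. left. apply G_strict; lra.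
  apply is_lim_const. apply G_lim.
Qed.

Lemma G_lb : forall y, - (sqrt PI / 2) < G y.
Proof. intros y. pose proof (G_ub (- y)) as Hg. rewrite G_odd in Hg. lra. Qed.

Lemma Nphi_bounds : forall x, 0 < Nphi x < 1.
Proof.
  intros x. rewrite Nphi_eq. unfold Ncl. pose proof sqrtPI_pos.
  pose proof (G_ub (x / sqrt 2)). pose proof (G_lb (x / sqrt 2)).
  split.
  - apply (Rmult_lt_reg_r (sqrt PI)). auto. unfold Rdiv. rewrite Rmult_plus_distr_r, Rmult_assoc, Rinv_l by lra. lra.
  - apply (Rmult_lt_reg_r (sqrt PI)). auto. unfold Rdiv. rewrite Rmult_plus_distr_r, Rmult_assoc, Rinv_l by lra. lra.
Qed.

Lemma Ncl_lim_gen : forall (g : R -> R) (l : R) (x : Rbar), is_lim g x l ->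
  is_lim (fun y => / 2 + g y / sqrt PI) x (/ 2 + l / sqrt PI).
Proof.
  intros g l x Hl.
  apply (is_lim_plus (fun _ => / 2) (fun y => g y / sqrt PI) x (/2) (l / sqrt PI)).
  apply is_lim_const.
  apply (is_lim_ext (fun y => / sqrt PI * g y)). intros; unfold Rdiv; apply Rmult_comm.
  replace (Finite (l / sqrt PI)) with (Rbar_mult (/ sqrt PI) l); [| simpl; apply Rbar_finite_eq; unfold Rdiv; ring].
  apply is_lim_scal_l. auto.
  reflexivity.
Qed.

Lemma div_sqrt2_lim : forall x : Rbar, x = p_infty \/ x = m_infty ->
  is_lim (fun y => y / sqrt 2) x x.
Proof.
  intros x Hx. pose proof sqrt2_pos.
  apply (is_lim_ext (fun y => / sqrt 2 * y)). intros y; unfold Rdiv; apply Rmult_comm.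
  replace x with (Rbar_mult (/ sqrt 2) x) at 2.
  apply is_lim_scal_l, is_lim_id.
  assert (0 < / sqrt 2) by (apply Rinv_0_lt_compat; auto).
  destruct Hx; subst; simpl; destruct (Rle_dec 0 (/ sqrt 2)); try lra;
  destruct (Rle_lt_or_eq_dec 0 (/ sqrt 2) r); try lra; reflexivity.
Qed.

Lemma Nphi_lim_p : is_lim Nphi p_infty 1.
Proof.
  apply (is_lim_ext Ncl). intros; symmetry; apply Nphi_eq.
  unfold Ncl.
  replace (Finite 1) with (Finite (/ 2 + (sqrt PI / 2) / sqrt PI)).
  2:{ apply Rbar_finite_eq. pose proof sqrtPI_pos. field. lra. }
  apply (Ncl_lim_gen (fun y => G (y / sqrt 2))).
  apply (is_lim_comp G (fun y => y / sqrt 2) p_infty (sqrt PI / 2) p_infty).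
  apply G_lim. apply div_sqrt2_lim; auto.
  exists 0; intros; discriminate.
Qed.

Lemma Nphi_lim_m : is_lim Nphi m_infty 0.
Proof.
  apply (is_lim_ext Ncl). intros; symmetry; apply Nphi_eq.
  unfold Ncl.
  replace (Finite 0) with (Finite (/ 2 + (- (sqrt PI / 2)) / sqrt PI)).
  2:{ apply Rbar_finite_eq. pose proof sqrtPI_pos. field. lra. }
  apply (Ncl_lim_gen (fun y => G (y / sqrt 2))).
  apply (is_lim_comp G (fun y => y / sqrt 2) m_infty (- (sqrt PI / 2)) m_infty).
  apply G_lim_m. apply div_sqrt2_lim; auto.
  exists 0; intros; discriminate.
Qed.


Lemma sqrt2PI_pos : 0 < sqrt (2 * PI).
Proof. apply sqrt_lt_R0. pose proof PI_RGT_0; lra. Qed.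

Lemma phi_deriv : forall x : R, is_derive phi x (- x * phi x).
Proof.
  intros x. unfold phi. pose proof sqrt2PI_pos. eapply is_derive_eq. auto_derive. auto.
  reflexivity. replace (- (x * (x * 1)) * / 2) with (- x ^ 2 / 2) by field. field. lra.
Qed.

Lemma DNphi : forall x, Derive Nphi x = phi x.
Proof. intros; apply is_derive_unique, Nphi_deriv. Qed.
Lemma exNphi : forall x, ex_derive Nphi x.
Proof. intros; eexists; apply Nphi_deriv. Qed.
Lemma Dphi : forall x, Derive phi x = - x * phi x.
Proof. intros; apply is_derive_unique, phi_deriv. Qed.
Lemma exphi : forall x, ex_derive phi x.
Proof. intros; eexists; apply phi_deriv. Qed.

Definition hm (z : R) := phi z / (- z) - Nphi z.

Lemma hm_deriv : forall z : R, z < 0 -> is_derive hm z (phi z / (z * z)).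
Proof.
  intros z Hz. unfold hm. eapply is_derive_eq. auto_derive.
  repeat split; try apply exphi; try apply exNphi. lra.
  reflexivity. rewrite Dphi, DNphi. field. lra.
Qed.

Lemma phi_lim_m : is_lim phi m_infty 0.
Proof.
  unfold phi.
  apply (is_lim_ext (fun x => / sqrt (2*PI) * exp (- x^2/2))). intros; unfold Rdiv; apply Rmult_comm.
  replace (Finite 0) with (Rbar_mult (/ sqrt (2*PI)) 0) by (simpl; apply Rbar_finite_eq; ring).
  apply is_lim_scal_l.
  apply (is_lim_comp (fun y => exp y) (fun x => - x^2/2) m_infty 0 m_infty).
  apply is_lim_exp_m.
  apply (is_lim_ext (fun x => (- / 2) * (x * x))). intros; simpl; field.
  replace m_infty with (Rbar_mult (- / 2) (Rbar_mult m_infty m_infty)) at 2.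
  apply is_lim_scal_l. apply is_lim_mult; try apply is_lim_id. simpl; auto.
  simpl. destruct (Rle_dec 0 (- / 2)) as [h|h]. exfalso. assert (0 < / 2) by (apply Rinv_0_lt_compat; lra). lra. reflexivity.
  simpl. exists 0. intros; discriminate.
Qed.

Lemma hm_lim : is_lim hm m_infty 0.
Proof.
  unfold hm.
  replace (Finite 0) with (Finite (0 * 0 - 0)) by (apply Rbar_finite_eq; ring).
  apply (is_lim_minus _ _ m_infty (0*0) 0); [| apply Nphi_lim_m | reflexivity].
  apply (is_lim_ext (fun z => phi z * / (- z))). intros; reflexivity.
  replace (Finite (0 * 0)) with (Rbar_mult 0 (Rbar_inv p_infty)) by reflexivity.
  apply is_lim_mult; [apply phi_lim_m | | simpl; auto].
  apply (is_lim_inv (fun z => - z) m_infty p_infty).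
  replace p_infty with (Rbar_opp m_infty) by reflexivity.
  apply is_lim_opp, is_lim_id. discriminate.
Qed.

Lemma hm_incr : forall w z, w < z -> z < 0 -> hm w < hm z.
Proof.
  intros w z Hwz Hz.
  destruct (MVT_gen hm w z (fun c => phi c / (c * c))) as [c [Hc Hc2]].
  - intros c Hc. rewrite Rmin_left, Rmax_right in Hc by lra. apply hm_deriv. lra.
  - intros c Hc. rewrite Rmin_left, Rmax_right in Hc by lra.
    apply derivable_continuous_pt. exists (phi c / (c * c)). apply is_derive_Reals. apply hm_deriv. lra.
  - rewrite Rmin_left, Rmax_right in Hc by lra.
    assert (0 < phi c / (c * c)). { apply Rdiv_lt_0_compat. apply phi_pos. nra. }
    nra.
Qed.

Lemma hm_pos : forall z, z < 0 -> 0 < hm z.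
Proof.
  intros z Hz.
  assert (0 <= hm (z - 1)).
  { assert (Hle := is_lim_le_loc (fun _ => 0) hm m_infty 0 0).
    assert (Hle2 := is_lim_le_loc hm (fun _ => hm (z - 1)) m_infty 0 (hm (z-1))).
    simpl in Hle2. apply Hle2.
    exists (z - 1). intros w Hw. left. apply hm_incr; lra.
    apply hm_lim. apply is_lim_const. }
  pose proof (hm_incr (z - 1) z). lra.
Qed.

Lemma mills : forall z, z < 0 -> - z * Nphi z < phi z.
Proof.
  intros z Hz. pose proof (hm_pos z Hz) as Hh. unfold hm in Hh.
  assert (H0 : Nphi z < phi z / - z) by lra.
  apply (Rmult_lt_compat_l (- z)) in H0; [| lra].
  replace (- z * (phi z / - z)) with (phi z) in H0 by (field; lra). lra.
Qed.


Ltac pos := match goal with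
 | |- 0 < _ * _ => apply Rmult_lt_0_compat; pos
 | |- 0 < / _ => apply Rinv_0_lt_compat; pos
 | |- 0 < _ / _ => apply Rdiv_lt_0_compat; pos
 | |- 0 < exp _ => apply exp_pos
 | |- 0 < phi _ => apply phi_pos
 | |- ?x <> 0 => apply Rgt_not_eq; unfold Rgt; pos
 | |- _ => auto; lra end.
Ltac splits := repeat match goal with |- _ /\ _ => split | |- True => exact I end.
Ltac side := splits; pos.
Ltac dtac := eapply is_derive_eq; [auto_derive; try side; try reflexivity | ].

Definition kk (r q a sigma : R) := 1 - 2 * (r - q - a) / sigma ^ 2.
Definition e1 (r q sigma b V u : R) := (ln (V / b) + (r - q - sigma ^ 2 / 2) * (u * u)) / (sigma * u).
Definition e2 (r q a sigma b V u : R) := (ln (b / V) + (r - q - 2 * a - sigma ^ 2 / 2) * (u * u)) / (sigma * u).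
Definition Pw (r q a sigma b V u : R) := exp (kk r q a sigma * ln (V / (b * exp (- a * (u * u))))).

Lemma e1_dV : forall r q sigma b V u, 0 < sigma -> 0 < b -> 0 < V -> 0 < u ->
  is_derive (fun x => e1 r q sigma b x u) V (/ (V * sigma * u)).
Proof.
  intros. unfold e1. dtac. field. lra.
Qed.

Lemma e2_dV : forall r q a sigma b V u, 0 < sigma -> 0 < b -> 0 < V -> 0 < u ->
  is_derive (fun x => e2 r q a sigma b x u) V (- / (V * sigma * u)).
Proof.
  intros. unfold e2. dtac. field. lra.
Qed.

Lemma e1_du : forall r q sigma b V u, 0 < sigma -> 0 < b -> 0 < V -> 0 < u ->
  is_derive (fun y => e1 r q sigma b V y) u (2 * (r - q - sigma ^ 2 / 2) / sigma - e1 r q sigma b V u / u).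
Proof.
  intros. unfold e1. dtac. field. lra.
Qed.

Lemma e2_du : forall r q a sigma b V u, 0 < sigma -> 0 < b -> 0 < V -> 0 < u ->
  is_derive (fun y => e2 r q a sigma b V y) u (2 * (r - q - 2 * a - sigma ^ 2 / 2) / sigma - e2 r q a sigma b V u / u).
Proof.
  intros. unfold e2. dtac. field. lra.
Qed.

Lemma Pw_dV : forall r q a sigma b V u, 0 < sigma -> 0 < b -> 0 < V ->
  is_derive (fun x => Pw r q a sigma b x u) V (kk r q a sigma * Pw r q a sigma b V u / V).
Proof.
  intros. unfold Pw. pose proof (exp_pos (- a * (u * u))). dtac. unfold Rdiv. field. side.
Qed.

Lemma Pw_du : forall r q a sigma b V u, 0 < sigma -> 0 < b -> 0 < V ->
  is_derive (fun y => Pw r q a sigma b V y) u (2 * a * kk r q a sigma * u * Pw r q a sigma b V u).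
Proof.
  intros. unfold Pw. pose proof (exp_pos (- a * (u * u))). dtac. unfold Rdiv. field. side.
Qed.


Lemma De1V : forall r q sigma b V u, 0 < sigma -> 0 < b -> 0 < V -> 0 < u ->
  Derive (fun x => e1 r q sigma b x u) V = / (V * sigma * u).
Proof. intros; apply is_derive_unique, e1_dV; auto. Qed.
Lemma De2V : forall r q a sigma b V u, 0 < sigma -> 0 < b -> 0 < V -> 0 < u ->
  Derive (fun x => e2 r q a sigma b x u) V = - / (V * sigma * u).
Proof. intros; apply is_derive_unique, e2_dV; auto. Qed.
Lemma De1u : forall r q sigma b V u, 0 < sigma -> 0 < b -> 0 < V -> 0 < u ->
  Derive (fun y => e1 r q sigma b V y) u = 2 * (r - q - sigma ^ 2 / 2) / sigma - e1 r q sigma b V u / u.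
Proof. intros; apply is_derive_unique, e1_du; auto. Qed.
Lemma De2u : forall r q a sigma b V u, 0 < sigma -> 0 < b -> 0 < V -> 0 < u ->
  Derive (fun y => e2 r q a sigma b V y) u = 2 * (r - q - 2 * a - sigma ^ 2 / 2) / sigma - e2 r q a sigma b V u / u.
Proof. intros; apply is_derive_unique, e2_du; auto. Qed.
Lemma DPwV : forall r q a sigma b V u, 0 < sigma -> 0 < b -> 0 < V ->
  Derive (fun x => Pw r q a sigma b x u) V = kk r q a sigma * Pw r q a sigma b V u / V.
Proof. intros; apply is_derive_unique, Pw_dV; auto. Qed.
Lemma DPwu : forall r q a sigma b V u, 0 < sigma -> 0 < b -> 0 < V ->
  Derive (fun y => Pw r q a sigma b V y) u = 2 * a * kk r q a sigma * u * Pw r q a sigma b V u.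
Proof. intros; apply is_derive_unique, Pw_du; auto. Qed.

Lemma exe1V : forall r q sigma b V u, 0 < sigma -> 0 < b -> 0 < V -> 0 < u ->
  ex_derive (fun x => e1 r q sigma b x u) V.
Proof. intros; eexists; apply e1_dV; auto. Qed.
Lemma exe2V : forall r q a sigma b V u, 0 < sigma -> 0 < b -> 0 < V -> 0 < u ->
  ex_derive (fun x => e2 r q a sigma b x u) V.
Proof. intros; eexists; apply e2_dV; auto. Qed.
Lemma exe1u : forall r q sigma b V u, 0 < sigma -> 0 < b -> 0 < V -> 0 < u ->
  ex_derive (fun y => e1 r q sigma b V y) u.
Proof. intros; eexists; apply e1_du; auto. Qed.
Lemma exe2u : forall r q a sigma b V u, 0 < sigma -> 0 < b -> 0 < V -> 0 < u ->
  ex_derive (fun y => e2 r q a sigma b V y) u.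
Proof. intros; eexists; apply e2_du; auto. Qed.
Lemma exPwV : forall r q a sigma b V u, 0 < sigma -> 0 < b -> 0 < V ->
  ex_derive (fun x => Pw r q a sigma b x u) V.
Proof. intros; eexists; apply Pw_dV; auto. Qed.
Lemma exPwu : forall r q a sigma b V u, 0 < sigma -> 0 < b -> 0 < V ->
  ex_derive (fun y => Pw r q a sigma b V y) u.
Proof. intros; eexists; apply Pw_du; auto. Qed.

Ltac exd := match goal with
  | |- ex_derive (fun x => Nphi x) _ => apply exNphi
  | |- ex_derive Nphi _ => apply exNphi
  | |- ex_derive (fun x => phi x) _ => apply exphi
  | |- ex_derive phi _ => apply exphi
  | |- ex_derive (fun x => e1 _ _ _ _ x _) _ => apply exe1V; auto
  | |- ex_derive (fun x => e2 _ _ _ _ _ x _) _ => apply exe2V; auto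
  | |- ex_derive (fun y => e1 _ _ _ _ _ y) _ => apply exe1u; auto
  | |- ex_derive (fun y => e2 _ _ _ _ _ _ y) _ => apply exe2u; auto
  | |- ex_derive (fun x => Pw _ _ _ _ _ x _) _ => apply exPwV; auto
  | |- ex_derive (fun y => Pw _ _ _ _ _ _ y) _ => apply exPwu; auto
  end.
Ltac side2 := splits; first [exact I | exd | pos].
Ltac dtac2 := eapply is_derive_eq; [auto_derive; try side2; try reflexivity | ].
Lemma DNphi' : forall y, Derive (fun x => Nphi x) y = phi y.
Proof. apply DNphi. Qed.
Lemma Dphi' : forall y, Derive (fun x => phi x) y = - y * phi y.
Proof. apply Dphi. Qed.
Ltac rwD := repeat match goal with
  | |- context [Derive (fun x => Nphi x) ?y] => rewrite (DNphi' y)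
  | |- context [Derive (fun x => phi x) ?y] => rewrite (Dphi' y)
  | |- context [Derive (fun x => e1 ?r ?q ?s ?b x ?u) ?V] => rewrite (De1V r q s b V u) by auto
  | |- context [Derive (fun x => e2 ?r ?q ?a ?s ?b x ?u) ?V] => rewrite (De2V r q a s b V u) by auto
  | |- context [Derive (fun y => e1 ?r ?q ?s ?b ?V y) ?u] => rewrite (De1u r q s b V u) by auto
  | |- context [Derive (fun y => e2 ?r ?q ?a ?s ?b ?V y) ?u] => rewrite (De2u r q a s b V u) by auto
  | |- context [Derive (fun x => Pw ?r ?q ?a ?s ?b x ?u) ?V] => rewrite (DPwV r q a s b V u) by auto
  | |- context [Derive (fun y => Pw ?r ?q ?a ?s ?b ?V y) ?u] => rewrite (DPwu r q a s b V u) by auto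
  end.

Definition Wu r q a sigma b V u :=
  Nphi (e1 r q sigma b V u) - Pw r q a sigma b V u * Nphi (e2 r q a sigma b V u).
Definition Bu r q a sigma b Rec V u :=
  Rec * exp (- r * (u * u)) + Wu r q a sigma b V u * (1 - Rec) * exp (- r * (u * u)).

Definition BV r q a sigma b Rec V u :=
  (1 - Rec) * exp (- r * (u * u)) *
  (phi (e1 r q sigma b V u) / (V * sigma * u)
   - kk r q a sigma * Pw r q a sigma b V u / V * Nphi (e2 r q a sigma b V u)
   + Pw r q a sigma b V u * phi (e2 r q a sigma b V u) / (V * sigma * u)).

Lemma Bu_dV : forall r q a sigma b Rec V u, 0 < sigma -> 0 < b -> 0 < V -> 0 < u ->
  is_derive (fun x => Bu r q a sigma b Rec x u) V (BV r q a sigma b Rec V u).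
Proof.
  intros. unfold Bu, Wu, BV. dtac2. rwD. field. side.
Qed.

Definition BVV r q a sigma b Rec V u :=
  (1 - Rec) * exp (- r * (u * u)) *
  ((- phi (e1 r q sigma b V u) * (e1 r q sigma b V u / (sigma * u) + 1) / (sigma * u)
    - kk r q a sigma * (kk r q a sigma - 1) * Pw r q a sigma b V u * Nphi (e2 r q a sigma b V u)
    + kk r q a sigma * Pw r q a sigma b V u * phi (e2 r q a sigma b V u) / (sigma * u)
    + Pw r q a sigma b V u * phi (e2 r q a sigma b V u)
      * (kk r q a sigma + e2 r q a sigma b V u / (sigma * u) - 1) / (sigma * u)) / (V * V)).

Lemma BV_dV : forall r q a sigma b Rec V u, 0 < sigma -> 0 < b -> 0 < V -> 0 < u ->
  is_derive (fun x => BV r q a sigma b Rec x u) V (BVV r q a sigma b Rec V u).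
Proof.
  intros. unfold BV, BVV. dtac2. rwD. field. side.
Qed.

Definition BU r q a sigma b Rec V u :=
  - 2 * r * u * Bu r q a sigma b Rec V u
  + (phi (e1 r q sigma b V u) * (2 * (r - q - sigma ^ 2 / 2) / sigma - e1 r q sigma b V u / u)
     - 2 * a * kk r q a sigma * u * Pw r q a sigma b V u * Nphi (e2 r q a sigma b V u)
     - Pw r q a sigma b V u * phi (e2 r q a sigma b V u)
       * (2 * (r - q - 2 * a - sigma ^ 2 / 2) / sigma - e2 r q a sigma b V u / u))
    * (1 - Rec) * exp (- r * (u * u)).

Lemma Bu_du : forall r q a sigma b Rec V u, 0 < sigma -> 0 < b -> 0 < V -> 0 < u ->
  is_derive (fun y => Bu r q a sigma b Rec V y) u (BU r q a sigma b Rec V u).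
Proof.
  intros. unfold Bu, Wu, BU. dtac2. rwD. unfold Bu, Wu. field. side.
Qed.

Lemma pde_u : forall r q a sigma b Rec V u, 0 < sigma -> 0 < b -> 0 < V -> 0 < u ->
  BU r q a sigma b Rec V u * (- / (2 * u))
  + / 2 * sigma ^ 2 * V ^ 2 * BVV r q a sigma b Rec V u
  + (r - q) * V * BV r q a sigma b Rec V u
  - r * Bu r q a sigma b Rec V u = 0.
Proof.
  intros. unfold BU, BVV, BV, kk. field. side.
Qed.


Lemma Bond_Bu : forall r q a sigma b Rec T x t, t <= T ->
  Bond r q a sigma b Rec T x t = Bu r q a sigma b Rec x (sqrt (T - t)).
Proof.
  intros. unfold Bond, Wsurv, Defs.d1, Defs.d2, Bu, Wu, e1, e2, Pw, Rpower, kk.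
  set (u := sqrt (T - t)).
  assert (E : T - t = u * u) by (unfold u; rewrite sqrt_sqrt; lra).
  rewrite !E. reflexivity.
Qed.

Lemma ln_barrier : forall a b V u, 0 < b -> 0 < V ->
  ln (V / (b * exp (- a * (u * u)))) = ln (V / b) + a * (u * u).
Proof.
  intros. pose proof (exp_pos (- a * (u * u))).
  rewrite ln_div, ln_mult, ln_exp, ln_div by (auto; apply Rmult_lt_0_compat; auto). ring.
Qed.

Lemma ln_bV : forall b V, 0 < b -> 0 < V -> ln (b / V) = - ln (V / b).
Proof. intros. rewrite !ln_div by auto. ring. Qed.

Lemma Wu_barrier : forall r q a sigma b u, 0 < sigma -> 0 < b -> 0 < u ->
  Wu r q a sigma b (b * exp (- a * (u * u))) u = 0.
Proof.
  intros. pose proof (exp_pos (- a * (u * u))).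
  unfold Wu, Pw, e1, e2.
  replace (b * exp (- a * (u * u)) / (b * exp (- a * (u * u)))) with 1 by (field; lra).
  rewrite ln_1, Rmult_0_r, exp_0, Rmult_1_l.
  replace (b * exp (- a * (u * u)) / b) with (exp (- a * (u * u))) by (field; lra).
  replace (b / (b * exp (- a * (u * u)))) with (exp (a * (u * u))).
  2:{ replace (a * (u * u)) with (- (- a * (u * u))) by ring. rewrite exp_Ropp. field. lra. }
  rewrite !ln_exp.
  replace ((a * (u * u) + (r - q - 2 * a - sigma ^ 2 / 2) * (u * u)) / (sigma * u))
    with ((- a * (u * u) + (r - q - sigma ^ 2 / 2) * (u * u)) / (sigma * u)) by (field; lra).
  ring.
Qed.

Lemma phi_rel : forall r q a sigma b V u, 0 < sigma -> 0 < b -> 0 < V -> 0 < u ->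
  phi (e1 r q sigma b V u) = Pw r q a sigma b V u * phi (e2 r q a sigma b V u).
Proof.
  intros. unfold phi, Pw, e1, e2, kk. rewrite ln_barrier, ln_bV by auto.
  unfold Rdiv. rewrite <- (Rmult_assoc (exp _) (exp _)), <- exp_plus. f_equal. f_equal.
  field. split; lra.
Qed.

Lemma y_pos : forall a b V u, 0 < b -> b * exp (- a * (u * u)) < V ->
  0 < ln (V / (b * exp (- a * (u * u)))).
Proof.
  intros. pose proof (exp_pos (- a * (u * u))). rewrite <- ln_1. apply ln_increasing. lra.
  apply (Rmult_lt_reg_r (b * exp (- a * (u * u)))). apply Rmult_lt_0_compat; auto.
  unfold Rdiv. rewrite Rmult_assoc, Rinv_l. lra. apply Rgt_not_eq. apply Rmult_lt_0_compat; auto.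
Qed.

Lemma WV_pos : forall r q a sigma b V u, 0 < sigma -> 0 < b -> 0 < u -> b * exp (- a * (u * u)) < V ->
  0 < 2 * phi (e2 r q a sigma b V u) / (sigma * u) - kk r q a sigma * Nphi (e2 r q a sigma b V u).
Proof.
  intros r q a sigma b V u Hs Hb Hu HV.
  assert (HV0 : 0 < V) by (pose proof (exp_pos (- a * (u * u))); nra).
  pose proof (y_pos a b V u Hb HV) as Hy.
  set (y := ln (V / (b * exp (- a * (u * u))))) in *.
  set (mu := r - q - a - sigma ^ 2 / 2).
  assert (Hk : kk r q a sigma = - 2 * mu / sigma ^ 2) by (unfold kk, mu; field; lra).
  assert (He2 : e2 r q a sigma b V u = (- y + mu * (u * u)) / (sigma * u)).
  { unfold e2, y, mu. rewrite ln_barrier, ln_bV by auto. field. lra. }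
  set (z := e2 r q a sigma b V u) in *.
  pose proof (phi_pos z). pose proof (Nphi_bounds z) as [HN0 HN1].
  assert (Hsu : 0 < sigma * u) by (apply Rmult_lt_0_compat; auto).
  rewrite Hk.
  destruct (Rle_or_lt 0 mu) as [Hm|Hm].
  - assert (0 <= mu / sigma ^ 2) by (apply Rdiv_le_0_compat; [lra | apply pow_lt; lra]).
    assert (0 < 2 * phi z / (sigma * u)) by (apply Rdiv_lt_0_compat; lra).
    replace (- 2 * mu / sigma ^ 2) with (- 2 * (mu / sigma ^ 2)) by (field; lra).
    nra.
  - assert (Hz : z < mu * u / sigma).
    { rewrite He2. apply (Rmult_lt_reg_r (sigma * u)). auto.
      replace ((- y + mu * (u * u)) / (sigma * u) * (sigma * u)) with (- y + mu * (u * u)) by (field; lra).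
      replace (mu * u / sigma * (sigma * u)) with (mu * (u * u)) by (field; lra). lra. }
    assert (Hw : mu * u / sigma < 0).
    { unfold Rdiv. assert (0 < / sigma) by (apply Rinv_0_lt_compat; lra). assert (mu * u < 0) by nra. nra. }
    assert (Hz0 : z < 0) by lra.
    pose proof (mills z Hz0) as Hmil.
    replace (2 * phi z / (sigma * u) - - 2 * mu / sigma ^ 2 * Nphi z)
      with (2 / (sigma * u) * (phi z + mu * u / sigma * Nphi z)) by (field; lra).
    apply Rmult_lt_0_compat. apply Rdiv_lt_0_compat; lra.
    assert ((mu * u / sigma - z) * Nphi z > 0) by (apply Rmult_lt_0_compat; lra).
    nra.
Qed.

Lemma BV_pos : forall r q a sigma b Rec V u, 0 < sigma -> 0 < b -> 0 < u -> Rec < 1 ->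
  b * exp (- a * (u * u)) < V -> 0 < BV r q a sigma b Rec V u.
Proof.
  intros r q a sigma b Rec V u Hs Hb Hu HR HV.
  assert (HV0 : 0 < V) by (pose proof (exp_pos (- a * (u * u))); nra).
  pose proof (WV_pos r q a sigma b V u Hs Hb Hu HV) as HW.
  unfold BV. rewrite (phi_rel r q a sigma b V u) by auto.
  apply Rmult_lt_0_compat. apply Rmult_lt_0_compat. lra. apply exp_pos.
  assert (HP : 0 < Pw r q a sigma b V u) by apply exp_pos.
  replace (Pw r q a sigma b V u * phi (e2 r q a sigma b V u) / (V * sigma * u) -
   kk r q a sigma * Pw r q a sigma b V u / V * Nphi (e2 r q a sigma b V u) +
   Pw r q a sigma b V u * phi (e2 r q a sigma b V u) / (V * sigma * u))
  with (Pw r q a sigma b V u / V * (2 * phi (e2 r q a sigma b V u) / (sigma * u) - kk r q a sigma * Nphi (e2 r q a sigma b V u)))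
  by (field; lra).
  apply Rmult_lt_0_compat; auto. apply Rdiv_lt_0_compat; auto.
Qed.

Lemma Bu_barrier : forall r q a sigma b Rec u, 0 < sigma -> 0 < b -> 0 < u ->
  Bu r q a sigma b Rec (b * exp (- a * (u * u))) u = Rec * exp (- r * (u * u)).
Proof. intros. unfold Bu. rewrite Wu_barrier by auto. ring. Qed.

Lemma Bu_bounds : forall r q a sigma b Rec V u, 0 < sigma -> 0 < b -> 0 < u -> 0 <= Rec -> Rec < 1 ->
  b * exp (- a * (u * u)) < V ->
  Rec * exp (- r * (u * u)) < Bu r q a sigma b Rec V u < exp (- r * (u * u)).
Proof.
  intros r q a sigma b Rec V u Hs Hb Hu HR0 HR1 HV.
  pose proof (exp_pos (- a * (u * u))) as He.
  set (Vb0 := b * exp (- a * (u * u))) in *.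
  assert (HVb0 : 0 < Vb0) by (unfold Vb0; apply Rmult_lt_0_compat; auto).
  split.
  - rewrite <- (Bu_barrier r q a sigma b Rec u) by auto. fold Vb0.
    destruct (MVT_cor2 (fun x => Bu r q a sigma b Rec x u) (fun x => BV r q a sigma b Rec x u) Vb0 V) as [c [Hc2 Hc]].
    + lra.
    + intros x Hx. apply is_derive_Reals. apply Bu_dV; auto; lra.
    + assert (0 < BV r q a sigma b Rec c u) by (apply BV_pos; auto; unfold Vb0 in *; lra).
      nra.
  - unfold Bu, Wu.
    pose proof (Nphi_bounds (e1 r q sigma b V u)). pose proof (Nphi_bounds (e2 r q a sigma b V u)).
    assert (HP : 0 < Pw r q a sigma b V u) by apply exp_pos.
    pose proof (exp_pos (- r * (u * u))).
    assert (0 < Pw r q a sigma b V u * Nphi (e2 r q a sigma b V u)) by (apply Rmult_lt_0_compat; lra).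
    assert (0 < (1 - Rec) * exp (- r * (u * u))) by (apply Rmult_lt_0_compat; lra).
    nra.
Qed.


Lemma lim_plus : forall (F : (R -> Prop) -> Prop) {FF : Filter F} (f g : R -> R) (lf lg : R),
  filterlim f F (locally lf) -> filterlim g F (locally lg) ->
  filterlim (fun x => f x + g x) F (locally (lf + lg)).
Proof.
  intros F FF f g lf lg Hf Hg.
  apply (filterlim_comp_2 f g Rplus Hf Hg).
  apply (filterlim_plus (K:=R_AbsRing) (V:=R_NormedModule) lf lg).
Qed.

Lemma lim_mult : forall (F : (R -> Prop) -> Prop) {FF : Filter F} (f g : R -> R) (lf lg : R),
  filterlim f F (locally lf) -> filterlim g F (locally lg) ->
  filterlim (fun x => f x * g x) F (locally (lf * lg)).
Proof.
  intros F FF f g lf lg Hf Hg.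
  apply (filterlim_comp_2 f g Rmult Hf Hg).
  apply (filterlim_mult (K:=R_AbsRing) lf lg).
Qed.

Lemma lim_cont0 : forall f : R -> R, continuous f 0 -> filterlim f (at_right 0) (locally (f 0)).
Proof.
  intros f Hf. apply (filterlim_filter_le_1 (F := locally 0)).
  apply filter_le_within. exact Hf.
Qed.

Lemma blowup : forall x c s, 0 < x -> 0 < s ->
  filterlim (fun u => (x + c * (u * u)) / (s * u)) (at_right 0) (Rbar_locally p_infty).
Proof.
  intros x c s Hx Hs P [M HM].
  set (d := Rmin 1 (Rmin (x / (2 * (Rabs c + 1))) (x / (2 * s * (Rabs M + 1))))).
  assert (Hc1 : 0 < Rabs c + 1) by (pose proof (Rabs_pos c); lra).
  assert (HM1 : 0 < Rabs M + 1) by (pose proof (Rabs_pos M); lra).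
  assert (Hd1 : 0 < x / (2 * (Rabs c + 1))) by (apply Rdiv_lt_0_compat; lra).
  assert (Hd2 : 0 < x / (2 * s * (Rabs M + 1))) by (apply Rdiv_lt_0_compat; [lra | apply Rmult_lt_0_compat; lra]).
  assert (Hd : 0 < d) by (unfold d; repeat apply Rmin_glb_lt; lra).
  exists (mkposreal d Hd). intros u Hu Hu0. apply HM.
  simpl in Hu. unfold ball in Hu; simpl in Hu; unfold AbsRing_ball, abs, minus, plus, opp in Hu; simpl in Hu.
  rewrite Ropp_0, Rplus_0_r, Rabs_pos_eq in Hu by lra.
  assert (u < 1) by (apply Rlt_le_trans with d; auto; apply Rmin_l).
  assert (Hu1 : u < x / (2 * (Rabs c + 1))) by (apply Rlt_le_trans with d; auto; unfold d; eapply Rle_trans; [apply Rmin_r | apply Rmin_l]).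
  assert (Hu2 : u < x / (2 * s * (Rabs M + 1))) by (apply Rlt_le_trans with d; auto; unfold d; eapply Rle_trans; [apply Rmin_r | apply Rmin_r]).
  assert (A1 : u * (2 * (Rabs c + 1)) < x).
  { apply (Rmult_lt_compat_r (2 * (Rabs c + 1))) in Hu1; [| lra].
    replace (x / (2 * (Rabs c + 1)) * (2 * (Rabs c + 1))) with x in Hu1 by (field; lra). lra. }
  assert (A2 : u * (2 * s * (Rabs M + 1)) < x).
  { apply (Rmult_lt_compat_r (2 * s * (Rabs M + 1))) in Hu2; [| apply Rmult_lt_0_compat; lra].
    replace (x / (2 * s * (Rabs M + 1)) * (2 * s * (Rabs M + 1))) with x in Hu2 by (field; lra). lra. }
  assert (A3 : - Rabs c * (u * u) <= c * (u * u)).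
  { pose proof (Rabs_pos c). assert (0 <= u * u) by nra.
    destruct (Rle_or_lt 0 c). rewrite Rabs_pos_eq by lra. nra. rewrite Rabs_left by lra. nra. }
  assert (A4 : Rabs c * (u * u) <= Rabs c * u) by (apply Rmult_le_compat_l; [apply Rabs_pos | nra]).
  assert (Hsu : 0 < s * u) by nra.
  apply (Rmult_lt_reg_r (s * u)). auto.
  unfold Rdiv. rewrite Rmult_assoc, Rinv_l, Rmult_1_r by lra.
  assert (M <= Rabs M) by apply RRle_abs.
  assert (M * (s * u) <= Rabs M * (s * u)) by nra.
  nra.
Qed.

Lemma sqrt_lim : forall T, filterlim (fun t => sqrt (T - t)) (at_left T) (at_right 0).
Proof.
  intros T P [eps HP].
  assert (He : 0 < eps * eps) by (pose proof (cond_pos eps); nra).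
  exists (mkposreal _ He). intros t Ht HtT.
  simpl in Ht. unfold ball in Ht; simpl in Ht; unfold AbsRing_ball, abs, minus, plus, opp in Ht; simpl in Ht.
  rewrite Rabs_left in Ht by lra.
  apply HP.
  - unfold ball; simpl; unfold AbsRing_ball, abs, minus, plus, opp; simpl.
    rewrite Ropp_0, Rplus_0_r. rewrite Rabs_pos_eq by apply sqrt_pos.
    rewrite <- (sqrt_square eps) by (pose proof (cond_pos eps); lra).
    apply sqrt_lt_1_alt. lra.
  - apply sqrt_lt_R0. lra.
Qed.

Lemma Bu_lim : forall r q a sigma b Rec V, 0 < sigma -> 0 < b -> b < V ->
  filterlim (fun u => Bu r q a sigma b Rec V u) (at_right 0) (locally 1).
Proof.
  intros r q a sigma b Rec V Hs Hb HV.
  assert (HV0 : 0 < V) by lra.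
  assert (HL : 0 < ln (V / b)).
  { rewrite <- ln_1. apply ln_increasing. lra.
    apply (Rmult_lt_reg_r b); auto. unfold Rdiv. rewrite Rmult_assoc, Rinv_l; lra. }
  assert (HE : filterlim (fun u => exp (- r * (u * u))) (at_right 0) (locally 1)).
  { replace 1 with (exp (- r * (0 * 0))) by (rewrite Rmult_0_r, Rmult_0_r, exp_0; reflexivity).
    apply (lim_cont0 (fun u => exp (- r * (u * u)))).
    apply (ex_derive_continuous (K:=R_AbsRing) (V:=R_NormedModule)). auto_derive. auto. }
  assert (HP : filterlim (fun u => Pw r q a sigma b V u) (at_right 0) (locally (Pw r q a sigma b V 0))).
  { apply (lim_cont0 (fun u => Pw r q a sigma b V u)).
    apply (ex_derive_continuous (K:=R_AbsRing) (V:=R_NormedModule)). apply exPwu; auto. }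
  assert (HN1 : filterlim (fun u => Nphi (e1 r q sigma b V u)) (at_right 0) (locally 1)).
  { apply (filterlim_comp _ _ _ (fun u => e1 r q sigma b V u) Nphi _ (Rbar_locally p_infty)).
    unfold e1. apply blowup; auto. exact Nphi_lim_p. }
  assert (HN2 : filterlim (fun u => Nphi (e2 r q a sigma b V u)) (at_right 0) (locally 0)).
  { apply (filterlim_ext (fun u => Nphi (- ((ln (V / b) + (- (r - q - 2 * a - sigma ^ 2 / 2)) * (u * u)) / (sigma * u))))).
    { intros u. f_equal. unfold e2. rewrite ln_bV by auto.
      destruct (Req_dec u 0) as [Hu|Hu].
      - subst u. rewrite !Rmult_0_r. unfold Rdiv. rewrite Rinv_0. ring.
      - field. split; lra. }
    apply (filterlim_comp _ _ _ (fun u => (ln (V / b) + (- (r - q - 2 * a - sigma ^ 2 / 2)) * (u * u)) / (sigma * u))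
      (fun y => Nphi (- y)) _ (Rbar_locally p_infty)).
    apply blowup; auto.
    apply (is_lim_comp Nphi (fun y => - y) p_infty 0 m_infty).
    exact Nphi_lim_m.
    replace m_infty with (Rbar_opp p_infty) by reflexivity. apply is_lim_opp, is_lim_id.
    exists 0. intros; discriminate. }
  unfold Bu, Wu.
  match goal with |- filterlim ?f ?F _ =>
    enough (Hm : filterlim f F (locally (Rec * 1 + (1 - Pw r q a sigma b V 0 * 0) * (1 - Rec) * 1)))
    by (replace (Rec * 1 + (1 - Pw r q a sigma b V 0 * 0) * (1 - Rec) * 1) with 1 in Hm by ring; exact Hm) end.
  apply lim_plus. apply at_right_proper_filter.
  apply lim_mult. apply at_right_proper_filter. apply filterlim_const. exact HE.
  apply lim_mult. apply at_right_proper_filter.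
  apply lim_mult. apply at_right_proper_filter.
  apply (lim_plus _ (fun u => Nphi (e1 r q sigma b V u)) (fun u => - (Pw r q a sigma b V u * Nphi (e2 r q a sigma b V u)))).
  exact HN1.
  replace (- (Pw r q a sigma b V 0 * 0)) with ((-1) * (Pw r q a sigma b V 0 * 0)) by ring.
  apply (filterlim_ext (fun u => (-1) * (Pw r q a sigma b V u * Nphi (e2 r q a sigma b V u)))).
  intros; ring.
  apply lim_mult. apply at_right_proper_filter. apply filterlim_const.
  apply lim_mult; auto. apply at_right_proper_filter.
  apply filterlim_const. exact HE.
Qed.


Theorem theorem3 (r q a sigma b Rec T : R)
  (Hsigma : 0 < sigma) (Hb : 0 < b) (HR0 : 0 <= Rec) (HR1 : Rec < 1) (HT : 0 < T) :
  let B := Bond r q a sigma b Rec T in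
  (* the PDE on V_b(t) < V, 0 < t < T *)
  (forall V t, 0 < t < T -> Vb a b T t < V ->
     ex_derive (fun s => B V s) t /\
     ex_derive (fun x => B x t) V /\
     ex_derive_n (fun x => B x t) 2 V /\
     Derive (fun s => B V s) t
     + / 2 * sigma ^ 2 * V ^ 2 * Derive_n (fun x => B x t) 2 V
     + (r - q) * V * Derive (fun x => B x t) V
     - r * B V t = 0) /\
  (* boundary condition on the default barrier *)
  (forall t, 0 < t < T -> B (Vb a b T t) t = exp (- r * (T - t)) * Rec) /\
  (* terminal condition B(V,T) = 1 for V > b, attained as t -> T^- *)
  (forall V, b < V -> filterlim (fun t => B V t) (at_left T) (locally 1)) /\
  (* monotonicity and bounds *)
  (forall V t, 0 <= t < T -> Vb a b T t < V ->
     ex_derive (fun x => B x t) V /\ 0 < Derive (fun x => B x t) V /\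
     Rec * exp (- r * (T - t)) < B V t < exp (- r * (T - t))).
Proof.
  cbv zeta.
  assert (Common : forall V t, t < T -> Vb a b T t < V ->
    0 < V /\ 0 < sqrt (T - t) /\ T - t = sqrt (T - t) * sqrt (T - t) /\
    b * exp (- a * (sqrt (T - t) * sqrt (T - t))) < V /\
    is_derive (fun x => Bond r q a sigma b Rec T x t) V (BV r q a sigma b Rec V (sqrt (T - t)))).
  { intros V t HtT HV. unfold Vb in HV.
    assert (E : T - t = sqrt (T - t) * sqrt (T - t)) by (rewrite sqrt_sqrt; lra).
    pose proof (exp_pos (- a * (T - t))).
    assert (HV0 : 0 < V) by nra.
    assert (Hu : 0 < sqrt (T - t)) by (apply sqrt_lt_R0; lra).
    split; [auto | split; [auto | split; [auto | split; [rewrite <- E; auto | ]]]].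
    apply (is_derive_ext (fun x => Bu r q a sigma b Rec x (sqrt (T - t)))).
    intros; symmetry; apply Bond_Bu; lra.
    apply Bu_dV; auto. }
  split; [| split; [| split]].
  - intros V t [Ht0 HtT] HV.
    destruct (Common V t HtT HV) as [HV0 [Hu [E [HV' DV]]]].
    set (u0 := sqrt (T - t)) in *.
    assert (Hloc : locally V (fun x => BV r q a sigma b Rec x u0 = Derive (fun y => Bond r q a sigma b Rec T y t) x)).
    { apply (locally_interval _ V 0 p_infty). simpl; auto. simpl; auto.
      intros x Hx _. simpl in Hx. symmetry. apply is_derive_unique.
      apply (is_derive_ext (fun x => Bu r q a sigma b Rec x u0)).
      intros; symmetry; apply Bond_Bu; lra.
      apply Bu_dV; auto. }
    assert (DVV : is_derive (fun x => Derive (fun y => Bond r q a sigma b Rec T y t) x) V (BVV r q a sigma b Rec V u0)).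
    { apply (is_derive_ext_loc (fun x => BV r q a sigma b Rec x u0)). exact Hloc. apply BV_dV; auto. }
    assert (Dt : is_derive (fun s => Bond r q a sigma b Rec T V s) t (BU r q a sigma b Rec V u0 * (- / (2 * u0)))).
    { apply (is_derive_ext_loc (fun s => Bu r q a sigma b Rec V (sqrt (T - s)))).
      { apply (locally_interval _ t m_infty T). simpl; auto. simpl; auto.
        intros s _ Hs. simpl in Hs. symmetry. apply Bond_Bu. lra. }
      assert (Dg : is_derive (fun s => sqrt (T - s)) t (- / (2 * u0))).
      { eapply is_derive_eq. auto_derive. lra. reflexivity. change (T + - t) with (T - t). fold u0. field. lra. }
      pose proof (is_derive_comp (fun y => Bu r q a sigma b Rec V y) (fun s => sqrt (T - s)) t _ _
                   (Bu_du r q a sigma b Rec V u0 Hsigma Hb HV0 Hu) Dg) as Hc.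
      eapply is_derive_eq. exact Hc. unfold scal; simpl; unfold mult; simpl. ring. }
    split; [eexists; exact Dt |].
    split; [eexists; exact DV |].
    split; [exact (ex_intro _ _ DVV) |].
    replace (Derive (fun s => Bond r q a sigma b Rec T V s) t) with (BU r q a sigma b Rec V u0 * (- / (2 * u0)))
      by (symmetry; apply is_derive_unique; exact Dt).
    replace (Derive (fun x => Bond r q a sigma b Rec T x t) V) with (BV r q a sigma b Rec V u0)
      by (symmetry; apply is_derive_unique; exact DV).
    replace (Derive_n (fun x => Bond r q a sigma b Rec T x t) 2 V) with (BVV r q a sigma b Rec V u0).
    2:{ symmetry. apply is_derive_unique. exact DVV. }
    rewrite Bond_Bu by lra. fold u0.
    apply pde_u; auto.
  - intros t [Ht0 HtT]. unfold Vb. rewrite Bond_Bu by lra.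
    assert (E : T - t = sqrt (T - t) * sqrt (T - t)) by (rewrite sqrt_sqrt; lra).
    assert (Hu : 0 < sqrt (T - t)) by (apply sqrt_lt_R0; lra).
    set (u0 := sqrt (T - t)) in *. rewrite E.
    rewrite Bu_barrier by auto. ring.
  - intros V HV.
    apply (filterlim_ext_loc (fun t => Bu r q a sigma b Rec V (sqrt (T - t)))).
    { exists (mkposreal 1 Rlt_0_1). intros t _ Ht. symmetry. apply Bond_Bu. lra. }
    apply (filterlim_comp _ _ _ (fun t => sqrt (T - t)) (fun u => Bu r q a sigma b Rec V u) _ (at_right 0)).
    apply sqrt_lim. apply Bu_lim; auto.
  - intros V t [Ht0 HtT] HV.
    destruct (Common V t HtT HV) as [HV0 [Hu [E [HV' DV]]]].
    set (u0 := sqrt (T - t)) in *.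
    split; [eexists; exact DV |].
    split. replace (Derive (fun x => Bond r q a sigma b Rec T x t) V) with (BV r q a sigma b Rec V u0)
      by (symmetry; apply is_derive_unique; exact DV). apply BV_pos; auto.
    rewrite Bond_Bu by lra. fold u0. rewrite E.
    apply Bu_bounds; auto.
Qed.
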